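(* If nodes have no a priori knowledge, there is no distributed algorithm that decides if a configuration is feasible. That is, there is no DRIP $D$ together with a function $g$ mapping final histories to $\{\text{yes},\text{no}\}$ such that, for every configuration $G$, when all nodes of $G$ execute $D$: if $G$ is feasible then $g$ outputs ''yes'' at every node, and if $G$ is not feasible then $g$ outputs ''no'' at at least one node.
   Context: Model. A configuration is a finite simple undirected connected graph $G$ in which each node $v$ is tagged with a non-negative integer $t_v$ (wakeup tag). Nodes are anonymous and communicate in synchronous global rounds. A node $v$ wakes up in the first global round $r\le t_v$ in which it receives a message, if any, and otherwise in global round $t_v$; its local clock is $0$ in its wakeup round, it acts from local round $1$, and nodes do not know the global clock. In each round a node transmits a message to all neighbours, listens, or terminates. A listening node receives $M$ if exactly one neighbour transmits ($M$), hears collision noise (distinct from silence and messages) if at least two neighbours transmit, and silence otherwise; a transmitting node hears nothing. The history $\mathcal H_v[i]$ of $v$ in local round $i$ is $(\emptyset)$ (transmitted, silence, or spontaneous wakeup at $i=0$), $(M)$ (received $M$, or woken by $M$ at $i=0$), or $( * )$ (collision). A DRIP is a function $D$ from finite history vectors to $\{\mathit{listen},\mathit{transmit}(M),\mathit{terminate}\}$; each node $v$ in local round $i\ge1$ performs $D(\mathcal H_v[0\ldots i-1])$, and every node eventually terminates permanently (first at local round $done_v$); outputs are functions of $\mathcal H_v[0\ldots done_v]$. A decision function $f$ maps final histories to $\{0,1\}$; $(D,f)$ is a dedicated leader election algorithm for $G$ if, when all nodes of $G$ execute $D$, exactly one node gets output $1$; $G$ is feasible if such a pair exists. ''No a priori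 knowledge'' means the same DRIP and output function are used for all configurations. *)

(* Defs.v *)
From mathcomp Require Import all_boot.
Unset Printing Implicit Defensive.

(* History entries: (empty) silence / transmitted / spontaneous wakeup,
   (M) a received message, ( * ) collision noise. *)
Inductive entry (M : Type) := ESil | EMsg of M | ECol.
Arguments ESil {M}. Arguments ECol {M}. Arguments EMsg {M}.

Inductive action (M : Type) := Listen | Transmit of M | Terminate.
Arguments Listen {M}. Arguments Terminate {M}. Arguments Transmit {M}.

Definition drip (M : Type) := seq (entry M) -> action M.

Record config := Config {
  cn : nat;
  cedge : rel 'I_cn;
  ctag : 'I_cn -> nat;
  cpos : 0 < cn;
  csym : symmetric cedge;
  cirr : irreflexive cedge;
  cconn : forall u v, connect cedge u v }.

Inductive status (M : Type) := Asleep | Active of seq (entry M) | Done of seq (entry M).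
Arguments Asleep {M}. Arguments Active {M}. Arguments Done {M}.

Section Run.
Variables (M : Type) (D : drip M).

Definition transmits (s : status M) : option M :=
  match s with
  | Active h => match D h with Transmit m => Some m | _ => None end
  | _ => None
  end.

Definition reception {n} (e : rel 'I_n) (tr : 'I_n -> option M) (v : 'I_n) : entry M :=
  match pmap id [seq (if e v u then tr u else None) | u <- enum 'I_n] with
  | [::] => ESil
  | [:: m] => EMsg m
  | _ => ECol
  end.

Definition node_step (tagv r : nat) (rec : entry M) (s : status M) : status M :=
  match s with
  | Asleep =>
      match rec with
      | EMsg m => Active [:: EMsg m]
      | _ => if r == tagv then Active [:: ESil]
             else Asleep
      end
  | Active h =>
      match D h with
      | Terminate => Done (rcons h ESil)
      | Transmit _ => Active (rcons h ESil)
      | Listen => Active (rcons h rec)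
      end
  | Done h => Done h
  end.

(* run G r v = status of v before global round r (i.e. after rounds 0..r-1) *)
Definition run (G : config) : nat -> 'I_(cn G) -> status M :=
  fix go (r : nat) : 'I_(cn G) -> status M :=
  match r with
  | 0 => fun _ => Asleep
  | r'.+1 =>
      let s := go r' in
      fun v => node_step (ctag G v) r'
                 (reception (cedge G) (fun u => transmits (s u)) v) (s v)
  end.

Definition final (G : config) (v : 'I_(cn G)) (h : seq (entry M)) : Prop :=
  exists r, run G r v = Done h.

Definition terminates (G : config) : Prop :=
  forall v : 'I_(cn G), exists h, final G v h.

Definition elects (f : seq (entry M) -> bool) (G : config) : Prop :=
  terminates G /\
  exists v : 'I_(cn G), forall w h, final G w h -> (f h = true <-> w = v).

End Run.
Arguments transmits {M}. Arguments reception {M n}. Arguments node_step {M}.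
Arguments run {M}. Arguments final {M}. Arguments terminates {M}. Arguments elects {M}.

Definition feasible (G : config) : Prop :=
  exists (D : drip nat) (f : seq (entry nat) -> bool), elects D f G.

(* (D,g) decides feasibility for all configurations (no a priori knowledge);
   g h = true means "yes". *)
Definition decides_feasibility {M : Type} (D : drip M) (g : seq (entry M) -> bool) : Prop :=
  forall G : config,
    terminates D G /\
    (feasible G -> forall v h, final D G v h -> g h = true) /\
    (~ feasible G -> exists v h, final D G v h /\ g h = false).

(* Main.v *)
Require Import Defs.
From mathcomp Require Import all_boot.

Lemma rec_none (M : Type) n (e : rel 'I_n) (tr : 'I_n -> option M) v :
  (forall u, (if e v u then tr u else None) = None) -> reception e tr v = ESil.
Proof.
move=> H; rewrite /reception.
have -> : pmap id [seq (if e v u then tr u else None) | u <- enum 'I_n] = [::].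
  by elim: (enum 'I_n) => //= u s IH; rewrite H /= IH.
by [].
Qed.

Definition G1 : config.
Proof.
refine (@Config 1 (fun _ _ => false) (fun _ => 0) erefl _ _ _).
- by move=> x y.
- by move=> x.
- move=> u v; rewrite (ord1 u) (ord1 v); exact: connect0.
Defined.

Definition K2 : config.
Proof.
refine (@Config 2 (fun u v => u != v) (fun _ => 0) erefl _ _ _).
- by move=> x y; rewrite eq_sym.
- by move=> x; rewrite /= eqxx.
- move=> u v; case: (eqVneq u v) => [->|huv]; first exact: connect0.
  by apply: connect1.
Defined.

Lemma K2_G1 (M : Type) (D : drip M) r (v : 'I_(cn K2)) :
  run D K2 r v = run D G1 r ord0.
Proof.
elim: r v => [//|r IH] v /=.
rewrite IH.
case E: (transmits D (run D G1 r ord0)) => [m|].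
- move: E; case: (run D G1 r ord0) => //= h.
  by case: (D h).
- rewrite !rec_none //.
  by move=> u; rewrite IH E; case: ifP.
Qed.

Lemma K2_infeasible : ~ feasible K2.
Proof.
case=> D [f [T [v Hv]]].
have ex : exists w : 'I_(cn K2), w != v.
  exists (if v == ord0 then (@Ordinal 2 1 erefl) else ord0).
  by case: (eqVneq v ord0) => [->|hv] //; rewrite eq_sym.
case: ex => w hwv.
case: (T v) => h [r Hr].
have Hw : final D K2 w h by exists r; rewrite K2_G1 -(K2_G1 _ _ _ v).
have Hvv := proj2 (Hv v h (ex_intro _ r Hr)) erefl.
by move: (proj1 (Hv w h Hw) Hvv) => E; rewrite E eqxx in hwv.
Qed.

Lemma G1_feasible : feasible G1.
Proof.
exists (fun _ => Terminate), (fun _ => true); split.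
- move=> v; exists [:: ESil; ESil]; exists 2 => /=.
  have E : forall w, reception (M:=nat) (fun _ _ : 'I_1 => false) (fun _ => None) w = ESil.
    by move=> w; apply: rec_none.
  by rewrite !E.
- exists ord0 => w h _; split=> // _; exact: ord1.
Qed.

Theorem proposition5 :
  forall (M : Type) (D : drip M) (g : seq (entry M) -> bool),
    ~ decides_feasibility D g.
Proof.
move=> M D g dec.
case: (dec K2) => _ [_ /(_ K2_infeasible) [v [h [[r Hr] Hg]]]].
case: (dec G1) => _ [/(_ G1_feasible) Y _].
have : g h = true by apply: (Y ord0); exists r; rewrite -(K2_G1 _ _ _ v).
by rewrite Hg.
Qed.
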